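(* Let $n\ge 5$ be odd and let $G$ be a connected oriented graph. The following are equivalent: (i) $G\to AC_n$; (ii) for every even integer $l$ with $4\le l\le n+1$, there is no semi-walk in $G$ following the same pattern as $Q_l$; (iii) $Q_{n+1}\not\to G$. Moreover, if $G$ has a vertex with both an in-neighbour and an out-neighbour, these are also equivalent to: (iv) with $(A_0,A_1,\dots,A_m,D_m,\dots,D_1)$ the $n$-cyclic cover of $G$ ($m=\frac{n-1}{2}$), the map $\varphi:V_G\to V_{AC_n}$ given by $\varphi(x)=a_i$ for $x\in A_i$ ($0\le i\le m$) and $\varphi(x)=a_{n-i}$ for $x\in D_i$ ($1\le i\le m$) is a homomorphism $G\to AC_n$.
   Context: An oriented graph is a digraph with no loops and no pair of opposite arcs. A homomorphism $G\to H$ is a vertex map sending arcs to arcs. A semi-walk in $D$ is a sequence $v_1a_1v_2\dots a_{k-1}v_k$ of (not necessarily distinct) vertices and arcs with $a_i$ having endpoints $v_i,v_{i+1}$; $a_i$ is forward if $a_i=(v_i,v_{i+1})$ and backward otherwise; its pattern is the word $l_1\dots l_{k-1}$ over $\{\to,\leftarrow\}$ with $l_i=\to$ iff $a_i$ is forward. The pattern of an oriented path $(p_0,\dots,p_k)$ is defined likewise. For $n\ge 3$, $Q_n$ is the oriented path $(q_0,\dots,q_{n-1})$ on $n$ vertices such that: the first two arcs $q_0q_1,q_1q_2$ are forward; the subpath $(q_1,\dots,q_{n-2})$ is alternating (consecutive arcs have opposite directions); and the last two arcs have the same direction. For $n\ge 3$, $AC_n$ is the oriented cycle with vertices $a_0,\dots,a_{n-1}$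 obtained from the path $(a_0,\dots,a_n)$ in which the arc between $a_i$ and $a_{i+1}$ is $a_i\to a_{i+1}$ if $i$ is even and $a_{i+1}\to a_i$ if $i$ is odd, by identifying $a_n$ with $a_0$. The $n$-cyclic cover (for odd $n\ge5$, $m=\frac{n-1}{2}$, and connected $G$ with a vertex having both in- and out-neighbours): $A_0=\{v: d^-(v)>0, d^+(v)>0\}$; $A_1$ = vertices of $V_G\setminus A_0$ with an in-neighbour in $A_0$; $D_1$ = vertices of $V_G\setminus A_0$ with an out-neighbour in $A_0$; $C_1=A_0\cup A_1\cup D_1$; for $i=2,\dots,m-1$, $D_i$ = vertices of $V_G\setminus C_{i-1}$ with a neighbour in $D_{i-1}$, $A_i$ = vertices of $V_G\setminus C_{i-1}$ with a neighbour in $A_{i-1}$, $C_i=C_{i-1}\cup A_i\cup D_i$; finally, if every vertex of $A_{m-1}$ has out-degree $0$ and every vertex of $D_{m-1}$ has in-degree $0$, $D_m$ = vertices of $V_G\setminus C_{m-1}$ with no out-neighbours and $A_m$ = vertices of $V_G\setminus C_{m-1}$ with no in-neighbours; otherwise $D_m$ = vertices of $V_G\setminus C_{m-1}$ with no in-neighbours and $A_m$ = vertices of $V_G\setminus C_{m-1}$ with no out-neighbours. The cover is $(A_0,A_1,\dots,A_m,D_m,\dots,D_1)$. *)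

(* Defs.v *)
From mathcomp Require Import all_boot.
Set Implicit Arguments. Unset Strict Implicit. Unset Printing Implicit Defensive.

(* A (finite) digraph is a relation E : rel T on a finType T; E x y means
   there is an arc x -> y. *)

Definition oriented (T : finType) (E : rel T) : Prop :=
  (forall x, ~~ E x x) /\ (forall x y, E x y -> ~~ E y x).

Definition wconnected (T : finType) (E : rel T) : Prop :=
  forall x y, connect (fun a b => E a b || E b a) x y.

(* The oriented cycle AC_n on vertices a_0..a_{n-1} = 'I_n :
   arc a_i -> a_{i+1 mod n} for i even, a_{i+1} -> a_i for i odd. *)
Definition AC (n : nat) : rel 'I_n :=
  fun x y => ((y == x.+1 %% n :> nat) && ~~ odd x)
          || ((x == y.+1 %% n :> nat) && odd y).

(* Direction (true = forward) of the arc between q_i and q_{i+1} in Q_k,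
   for i <= k-2: arcs 0,1 forward, arcs 1..k-3 alternate, arc k-2 has
   the same direction as arc k-3. *)
Definition dirQ (k i : nat) : bool :=
  if i <= 1 then true else if i <= k - 3 then odd i else odd (k - 3).

Definition Qrel (k : nat) : rel 'I_k :=
  fun x y => ((y == x.+1 :> nat) && dirQ k x) || ((x == y.+1 :> nat) && ~~ dirQ k y).

Definition patQ (k : nat) : seq bool := [seq dirQ k i | i <- iota 0 k.-1].

(* follows E x w s : the vertex sequence x :: s is a semi-walk of pattern w
   (in an oriented graph the arcs are determined by their endpoints). *)
Fixpoint follows (T : finType) (E : rel T) (x : T) (w : seq bool) (s : seq T) : bool :=
  match w, s with
  | [::], [::] => true
  | b :: w', y :: s' => (if b then E x y else E y x) && follows E y w' s'
  | _, _ => false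
  end.

Definition has_semiwalk (T : finType) (E : rel T) (w : seq bool) : Prop :=
  exists (x : T) (s : seq T), follows E x w s.

Definition homAC (T : finType) (E : rel T) (n : nat) : Prop :=
  exists f : T -> 'I_n, forall x y, E x y -> AC (f x) (f y).

Definition homQ (T : finType) (E : rel T) (k : nat) : Prop :=
  exists f : 'I_k -> T, forall i j, Qrel i j -> E (f i) (f j).

Section Cover.
Variables (T : finType) (E : rel T).

Definition A0 : {set T} := [set x | [exists y, E y x] && [exists y, E x y]].

Definition A1 : {set T} := [set x | (x \notin A0) && [exists y in A0, E y x]].
Definition D1 : {set T} := [set x | (x \notin A0) && [exists y in A0, E x y]].

(* lay k = (A_k, D_k, C_k) for 1 <= k; lay 0 = (A_0, set0, A_0). *)
Fixpoint lay (k : nat) : {set T} * {set T} * {set T} :=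
  match k with
  | 0 => (A0, set0, A0)
  | k'.+1 =>
    if k' is 0 then (A1, D1, A0 :|: A1 :|: D1)
    else
      let: (Ap, Dp, Cp) := lay k' in
      let Dk := [set x | (x \notin Cp) && [exists y in Dp, E x y || E y x]] in
      let Ak := [set x | (x \notin Cp) && [exists y in Ap, E x y || E y x]] in
      (Ak, Dk, Cp :|: Ak :|: Dk)
  end.

Definition coverA (m i : nat) : {set T} :=
  if i < m then (lay i).1.1
  else
    let: (Ap, Dp, Cp) := lay m.-1 in
    if [forall x in Ap, [forall y, ~~ E x y]] && [forall x in Dp, [forall y, ~~ E y x]]
    then [set x | (x \notin Cp) && [forall y, ~~ E y x]]
    else [set x | (x \notin Cp) && [forall y, ~~ E x y]].

Definition coverD (m i : nat) : {set T} :=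
  if i < m then (lay i).1.2
  else
    let: (Ap, Dp, Cp) := lay m.-1 in
    if [forall x in Ap, [forall y, ~~ E x y]] && [forall x in Dp, [forall y, ~~ E y x]]
    then [set x | (x \notin Cp) && [forall y, ~~ E x y]]
    else [set x | (x \notin Cp) && [forall y, ~~ E y x]].

(* phiRel n x j : phi(x) = a_j according to the cover, m = (n-1)/2:
   x \in A_i (0 <= i <= m) gives a_i ; x \in D_i (1 <= i <= m) gives a_{n-i}. *)
Definition phiRel (n : nat) (x : T) (j : 'I_n) : Prop :=
  let m := n.-1./2 in
  (exists i, i <= m /\ x \in coverA m i /\ (j : nat) = i)
  \/ (exists i, 1 <= i <= m /\ x \in coverD m i /\ (j : nat) = n - i).

End Cover.

(* (iv): phi is a well-defined map V_G -> V_{AC_n} and a homomorphism. *)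
Definition cover_hom (T : finType) (E : rel T) (n : nat) : Prop :=
  (forall x : T, exists! j : 'I_n, @phiRel T E n x j) /\
  (forall x y (i j : 'I_n), E x y -> @phiRel T E n x i -> @phiRel T E n y j -> AC i j).

(* Main.v *)
Require Import Defs.
From mathcomp Require Import all_boot zify.
From Stdlib Require Import IndefiniteDescription.
Set Implicit Arguments. Unset Strict Implicit. Unset Printing Implicit Defensive.

Section Walks.
Variables (T : finType) (E : rel T).

Definition Hn : rel (T * bool) :=
  fun u v => (u.2 != v.2) && (if u.2 then E u.1 v.1 else E v.1 u.1).

Lemma Hn_sym u v : Hn u v = Hn v u.
Proof. by case: u v => x [] [y []]. Qed.

Definition walkH (L : nat) (u v : T * bool) :=
  exists p, [/\ size p = L, path Hn u p & last u p = v].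

Lemma walkH0 u : walkH 0 u u.
Proof. by exists [::]. Qed.

Lemma walkH_cat L1 L2 u v w : walkH L1 u v -> walkH L2 v w -> walkH (L1 + L2) u w.
Proof.
case=> p [<- Pp <-] [q [<- Pq <-]]; exists (p ++ q).
by rewrite size_cat cat_path Pp Pq last_cat.
Qed.

Lemma walkH1 u v : Hn u v -> walkH 1 u v.
Proof. by move=> h; exists [:: v]; rewrite /= h. Qed.

Lemma walkH_step L u v w : walkH L u v -> Hn v w -> walkH L.+1 u w.
Proof. move=> h1 h2; rewrite -addn1; exact: walkH_cat h1 (walkH1 h2). Qed.

Lemma walkH_rev L u v : walkH L u v -> walkH L v u.
Proof.
case=> p [<- Pp <-]; elim: p u Pp => [|y p IH] u /=; first by move=> _; exact: walkH0.
case/andP=> h1 h2; have := IH _ h2; rewrite -addn1 => h.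
by apply: walkH_cat h (walkH1 _); rewrite Hn_sym.
Qed.

Lemma walkH_first L u v : walkH L.+1 u v -> exists w, Hn u w /\ walkH L w v.
Proof.
case=> [[|y p]] [//= [Hs] /andP [h1 h2] Hl]; exists y; split => //; by exists p.
Qed.

Lemma walkH_last L u v : walkH L.+1 u v -> exists w, walkH L u w /\ Hn w v.
Proof.
case=> p [Hs Pp Hl]; case/lastP: p Hs Pp Hl => [|p y] //.
rewrite size_rcons rcons_path last_rcons => -[Hs] /andP [h1 h2] <-.
by exists (last u p); split => //; exists p.
Qed.

Lemma walkH_pad L u v : 0 < L -> walkH L u v -> walkH L.+2 u v.
Proof.
case: L => // L _ h; have [w [h1 _]] := walkH_first h.
have h2 : walkH 2 u u by apply: (walkH_step (walkH1 h1)); rewrite Hn_sym.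
exact: walkH_cat h2 h.
Qed.

Lemma walkH_pad2 L k u v : 0 < L -> walkH L u v -> walkH (L + k.*2) u v.
Proof.
move=> hL h; elim: k => [|k IH]; first by rewrite addn0.
by rewrite doubleS !addnS; apply: walkH_pad => //; lia.
Qed.

Definition src x := [exists y, E x y].
Definition snk x := [exists y, E y x].

Lemma inA0 x : (x \in A0 E) = snk x && src x.
Proof. by rewrite inE. Qed.

Lemma walkH_phase L u y c : walkH L.+1 u (y, c) -> if c then src y else snk y.
Proof.
case/walkH_last=> w [_] /andP [/= hc]; case: c hc => /=; case: w => z [] //= _ h.
  by apply/existsP; exists z.
by apply/existsP; exists z.
Qed.

Definition bad L := exists a b, [/\ a \in A0 E, b \in A0 E & walkH L (a, true) (b, false)].

Lemma follows_size x w s : follows E x w s -> size w = size s.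
Proof. by elim: w x s => [|b w IH] x [|y s] //= /andP [_ /IH ->]. Qed.

Lemma follows_cat x w1 w2 s1 s2 : size w1 = size s1 ->
  follows E x (w1 ++ w2) (s1 ++ s2) = follows E x w1 s1 && follows E (last x s1) w2 s2.
Proof.
elim: w1 x s1 => [|b w IH] x [|y s] //= [Hs]; by rewrite IH // andbA.
Qed.

Lemma toFollow u p : path Hn u p -> follows E u.1 (map snd (belast u p)) (map fst p).
Proof.
elim: p u => [|y p IH] u //= /andP [/andP [_ h1] h2]; by rewrite h1 IH.
Qed.

Lemma phase_seq u p k : path Hn u p -> u.2 = odd k ->
  map snd (belast u p) = map odd (iota k (size p)).
Proof.
elim: p u k => [|y p IH] u k //= /andP [/andP [h0 _] h2] hk.
rewrite hk (IH y k.+1) //=; by move: h0; rewrite hk; case: (y.2); case: (odd k).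
Qed.

Lemma fromFollow L k x s : follows E x (map odd (iota k L)) s ->
  walkH L (x, odd k) (last x s, odd (k + L)).
Proof.
elim: L k x s => [|L IH] k x [|y s] //=.
  by move=> _; rewrite addn0; exact: walkH0.
case/andP=> h1 h2; have := IH _ _ _ h2; rewrite addSnnS => h.
have h0 : Hn (x, odd k) (y, odd k.+1).
  by rewrite /Hn /=; case: (odd k) h1 => /=.
have := walkH_cat (walkH1 h0) h; by rewrite add1n.
Qed.

Lemma patQ_eq L : odd L -> patQ (L + 3) = true :: map odd (iota 1 L) ++ [:: true].
Proof.
move=> oL; rewrite /patQ addn3.
have -> : iota 0 L.+3.-1 = 0 :: iota 1 L ++ [:: L.+1].
  have e : L.+3.-1 = 1 + (L + 1) by lia.
  rewrite e iotaD iotaD /=; by rewrite add1n.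
rewrite /= map_cat /=.
rewrite /dirQ /=; have e3 : L.+3 - 3 = L by lia.
rewrite e3; congr (_ :: _ ++ _).
  apply/eq_in_map => i; rewrite mem_iota => /andP [h1 h2].
  case: ifP => [hi|_]; first by have -> : i = 1 by lia.
  by rewrite ifT //; lia.
have -> : (L < 1) = false by lia.
by rewrite ltnn oL.
Qed.

Lemma bad_walk L : odd L -> bad L -> has_semiwalk E (patQ (L + 3)).
Proof.
move=> oL [a [b [ha hb [p [Hs Pp Hl]]]]].
move: ha hb; rewrite !inA0 => /andP [/existsP [w hw] _] /andP [_ /existsP [z hz]].
exists w, (a :: map fst p ++ [:: z]); rewrite patQ_eq //= hw /=.
rewrite follows_cat; last by rewrite size_map size_map size_iota.
have := toFollow Pp; rewrite (phase_seq Pp (k:=1)) // Hs => -> /=.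
have -> : last a (map fst p) = b.
  by rewrite (last_map fst p (a, true)) Hl.
by rewrite hz.
Qed.

Lemma walk_bad l : ~~ odd l -> 4 <= l -> has_semiwalk E (patQ l) -> bad (l - 3).
Proof.
move=> el l4 [x [s]].
have [L [el3 oL]] : exists L, l = L + 3 /\ odd L by exists (l - 3); split; lia.
subst l; rewrite addnK.
have L1 : 0 < L by lia.
rewrite patQ_eq // => /= Hf.
case: s Hf => [|y s] //= /andP [hxy Hf].
have Hs := follows_size Hf; rewrite size_cat /= size_map size_iota in Hs.
have [s1 [z [es Hs1]]] : exists s1 z, s = rcons s1 z /\ size s1 = L.
  case/lastP: s {Hf} Hs => [|s1 z]; first by rewrite /=; lia.
  by rewrite size_rcons => Hs; exists s1, z; split => //; lia.
subst s; rewrite -cats1 follows_cat ?size_map ?size_iota // in Hf.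
case/andP: Hf => Hf /= /andP [hz _].
have hw := fromFollow Hf; rewrite add1n in hw.
have oL1 : odd L.+1 = false by rewrite /=; rewrite oL.
rewrite oL1 in hw.
have [L' eL] : exists L', L = L'.+1 by exists L.-1; lia.
rewrite eL in hw.
exists y, (last y s1); split => //.
- rewrite inA0; apply/andP; split; first by apply/existsP; exists x.
  case/walkH_first: hw => [[w c] [/andP [/= _ h] _]].
  by apply/existsP; exists w.
- rewrite inA0; apply/andP; split; last by apply/existsP; exists z.
  exact: (walkH_phase hw).
by rewrite eL.
Qed.

End Walks.

Lemma walkH_map (T T' : finType) (E : rel T) (E' : rel T') (f : T -> T') L u v :
  (forall x y, E x y -> E' (f x) (f y)) -> walkH E L u v ->
  walkH E' L (f u.1, u.2) (f v.1, v.2).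
Proof.
move=> hf [p [<- Pp <-]]; exists [seq (f z.1, z.2) | z <- p]; split.
- by rewrite size_map.
- elim: p u Pp => [|y p IH] u //= /andP [/andP [h1 h2] h3].
  rewrite IH // andbT /Hn /= h1 /=; case: (u.2) h2 => /=; exact: hf.
- by rewrite (last_map (fun z => (f z.1, z.2))).
Qed.



Section ACfacts.
Variable n : nat.
Hypothesis on : odd n.
Hypothesis n3 : 2 < n.

Lemma AC_up (x y : 'I_n) : nat_of_ord y = (nat_of_ord x).+1 -> ~~ odd x -> Defs.AC x y.
Proof.
move=> e o; have hy := ltn_ord y; rewrite /Defs.AC /= o; apply/orP; left; rewrite andbT.
apply/eqP; rewrite modn_small; lia.
Qed.

Lemma AC_dn (x y : 'I_n) : nat_of_ord x = (nat_of_ord y).+1 -> odd y -> Defs.AC x y.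
Proof.
move=> e o; have hx := ltn_ord x; rewrite /Defs.AC /= o; apply/orP; right; rewrite andbT.
apply/eqP; rewrite modn_small; lia.
Qed.

Lemma AC_wrap (x y : 'I_n) : nat_of_ord x = n.-1 -> nat_of_ord y = 0 -> Defs.AC x y.
Proof.
move=> ex ey; rewrite /Defs.AC ex ey; apply/orP; left; apply/andP; split.
  apply/eqP; rewrite prednK ?modnn //; lia.
apply/negP => h; lia.
Qed.

Lemma succ_mod k x : x < k -> x.+1 %% k = if x.+1 == k then 0 else x.+1.
Proof.
move=> h; case: eqP => [->|ne]; first by rewrite modnn.
rewrite modn_small //; lia.
Qed.

Lemma smc k x : x < k -> (x.+1 %% k = 0 /\ x.+1 = k) \/ (x.+1 %% k = x.+1 /\ x.+1 < k).
Proof. move=> h; rewrite succ_mod //; case: eqP => e; [left|right]; lia. Qed.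

Lemma AC_both (x : 'I_n) (y z : 'I_n) : Defs.AC y x -> Defs.AC x z -> nat_of_ord x = 0.
Proof.
have hx := ltn_ord x; have hy := ltn_ord y; have hz := ltn_ord z.
rewrite /Defs.AC => /orP [/andP [/eqP h1 h2]|/andP [/eqP h1 h2]] /orP [/andP [/eqP h3 h4]|/andP [/eqP h3 h4]];
  have := smc hx; have := smc hy; have := smc hz; lia.
Qed.

Definition pot (u : 'I_n * bool) :=
  if u.2 then nat_of_ord u.1 else if nat_of_ord u.1 == 0 then n else nat_of_ord u.1.

Lemma pot_step u v : Hn (@Defs.AC n) u v -> pot v <= (pot u).+1.
Proof.
case: u v => x b [y c]; have hx := ltn_ord x; have hy := ltn_ord y.
rewrite /Hn /pot /Defs.AC /=; case: b; case: c => //= /orP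
  [/andP [/eqP h1 h2]|/andP [/eqP h1 h2]];
  case: eqP => e1; have := smc hx; have := smc hy; lia.
Qed.

Lemma pot_walk L u v : walkH (@Defs.AC n) L u v -> pot v <= pot u + L.
Proof.
case=> p [<- Pp <-]; elim: p u Pp => [|y p IH] u /=; first by rewrite addn0.
case/andP=> h1 h2; have := IH _ h2; have := pot_step h1; move=> a b; apply: (leq_trans b); rewrite addnS -addSn leq_add2r; exact: a.
Qed.

End ACfacts.

Section Hom.
Variables (T : finType) (E : rel T).

Lemma homAC_nobad n : odd n -> 2 < n -> homAC E n -> forall L, L < n -> ~ bad E L.
Proof.
move=> on n3 [f hf] L hL [a [b [ha hb hw]]].
have hw' := walkH_map hf hw; have := pot_walk on n3 hw'.
rewrite !inA0 in ha hb.
case/andP: ha => /existsP [a1 ha1] /existsP [a2 ha2].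
case/andP: hb => /existsP [b1 hb1] /existsP [b2 hb2].
have fa := AC_both on n3 (hf _ _ ha1) (hf _ _ ha2).
have fb := AC_both on n3 (hf _ _ hb1) (hf _ _ hb2).
rewrite /pot /= fa fb /=; lia.
Qed.

Lemma homQ_walk k : 0 < k -> homQ E k -> has_semiwalk E (patQ k).
Proof.
case: k => // k _ [f hf].
have key : forall r j, j + r <= k -> follows E (f (inord j)) (map (dirQ k.+1) (iota j r))
      (map (fun i => f (inord i)) (iota j.+1 r)).
  elim=> [|r IH] j hj //=; rewrite IH; last by lia.
  rewrite andbT; case: ifP => hd; apply: hf; rewrite /Qrel !inordK; try lia.
exists (f (inord 0)), (map (fun i => f (inord i)) (iota 1 k)); rewrite /patQ /=.
exact: key.
Qed.

Lemma follows_nth d x w s i : follows E x w s -> i < size w ->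
  if nth false w i then E (nth d (x :: s) i) (nth d (x :: s) i.+1)
  else E (nth d (x :: s) i.+1) (nth d (x :: s) i).
Proof.
elim: w x s i => [|b w IH] x [|y s] [|i] //= /andP [h1 h2] hi.
  by []. exact: IH.
Qed.

Lemma walk_homQ k : has_semiwalk E (patQ k) -> homQ E k.
Proof.
case=> x [s hf]; exists (fun i => nth x (x :: s) i) => i j.
have hi := ltn_ord i; have hj := ltn_ord j.
have sz : size (patQ k) = k.-1 by rewrite /patQ size_map size_iota.
have nthQ : forall t, t < k.-1 -> nth false (patQ k) t = dirQ k t.
  by move=> t ht; rewrite /patQ (nth_map 0) ?size_iota // nth_iota.
rewrite /Qrel => /orP [/andP [/eqP e d]|/andP [/eqP e d]].
  have hlt : i < k.-1 by lia.
  have := follows_nth x (i := i) hf; rewrite sz nthQ // d e; exact.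
have hlt : j < k.-1 by lia.
have := follows_nth x (i := j) hf; rewrite sz nthQ // (negbTE d) e; exact.
Qed.

End Hom.

Section Layers.
Variables (T : finType) (E : rel T).

Local Notation Ak k := (lay E k).1.1.
Local Notation Dk k := (lay E k).1.2.
Local Notation Ck k := (lay E k).2.

Definition adj x y := E x y || E y x.

Lemma laySS k : lay E k.+2 = let: (Ap, Dp, Cp) := lay E k.+1 in
   ([set x | (x \notin Cp) && [exists y in Ap, E x y || E y x]],
    [set x | (x \notin Cp) && [exists y in Dp, E x y || E y x]],
    Cp :|: [set x | (x \notin Cp) && [exists y in Ap, E x y || E y x]]
       :|: [set x | (x \notin Cp) && [exists y in Dp, E x y || E y x]]).
Proof. by []. Qed.

Lemma memA2 k x : 0 < k ->
  (x \in Ak k.+1) = (x \notin Ck k) && [exists y in Ak k, E x y || E y x].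
Proof. case: k => // k _; rewrite laySS; case: (lay E k.+1) => [[Ap Dp] Cp] /=; by rewrite inE. Qed.

Lemma memD2 k x : 0 < k ->
  (x \in Dk k.+1) = (x \notin Ck k) && [exists y in Dk k, E x y || E y x].
Proof. case: k => // k _; rewrite laySS; case: (lay E k.+1) => [[Ap Dp] Cp] /=; by rewrite inE. Qed.

Lemma memC k x : (x \in Ck k.+1) = [|| x \in Ck k, x \in Ak k.+1 | x \in Dk k.+1].
Proof.
case: k => [|k]; first by rewrite /= !inE orbA.
rewrite laySS; case: (lay E k.+1) => [[Ap Dp] Cp] /=; by rewrite !inE orbA.
Qed.

Lemma memA1 x : (x \in Ak 1) = (x \notin A0 E) && [exists y in A0 E, E y x].
Proof. by rewrite /= inE. Qed.

Lemma memD1 x : (x \in Dk 1) = (x \notin A0 E) && [exists y in A0 E, E x y].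
Proof. by rewrite /= inE. Qed.

Lemma Csub j k : j <= k -> {subset Ck j <= Ck k}.
Proof.
move=> hjk; elim: k hjk => [|k IH]; first by rewrite leqn0 => /eqP ->.
rewrite leq_eqVlt => /orP [/eqP -> //|hj] x hx.
by rewrite memC IH.
Qed.

Lemma A0C k : {subset A0 E <= Ck k}.
Proof. move=> x hx; exact: (Csub (leq0n k)). Qed.

Lemma ALnotC k x : x \in Ak k.+1 -> x \notin Ck k.
Proof.
case: k => [|k]; first by rewrite memA1 => /andP [].
by rewrite memA2 // => /andP [].
Qed.

Lemma DLnotC k x : x \in Dk k.+1 -> x \notin Ck k.
Proof.
case: k => [|k]; first by rewrite memD1 => /andP [].
by rewrite memD2 // => /andP [].
Qed.

Lemma ALC k x : x \in Ak k -> x \in Ck k.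
Proof. case: k => [//|k] h; by rewrite memC h orbT. Qed.

Lemma DLC k x : x \in Dk k -> x \in Ck k.
Proof. case: k => [|k] h; first by rewrite /= inE in h. by rewrite memC h !orbT. Qed.

Lemma notA0 k x : x \notin Ck k -> x \notin A0 E.
Proof. by apply: contra; apply: A0C. Qed.

Lemma nbC k x y : x \in Ck k -> adj x y -> y \in Ck k.+1.
Proof.
elim: k x y => [|k IH] x y.
  move=> hx hxy; have hx' : x \in A0 E := hx; rewrite memC.
  case hy: (y \in A0 E); first by [].
  case/orP: hxy => h; apply/orP; right; apply/orP; [left; rewrite memA1 | right; rewrite memD1];
    rewrite hy /=; apply/existsP; exists x; by rewrite hx' h.
rewrite memC => /orP [hx|/orP [hx|hx]] hxy.
- by apply: (Csub (leqnSn _)); apply: IH hxy.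
- case hy: (y \in Ck k.+1); first by apply: (Csub (leqnSn _)).
  rewrite memC memA2 // hy /=; apply/orP; left; apply/existsP; exists x.
  by rewrite hx /=; move: hxy; rewrite /adj orbC.
- case hy: (y \in Ck k.+1); first by apply: (Csub (leqnSn _)).
  rewrite memC memD2 // hy /=; apply/orP; right; apply/existsP; exists x.
  by rewrite hx /=; move: hxy; rewrite /adj orbC.
Qed.

Lemma phase_ok L u x c : walkH E L.+1 u (x, c) -> x \notin A0 E ->
  (forall z, E x z -> c) /\ (forall z, E z x -> ~~ c).
Proof.
move=> hw hx; have := walkH_phase hw; clear hw; rewrite inA0 in hx.
case: c => /= hs; split => // z hz.
  by case/negP: hx; rewrite hs andbT; apply/existsP; exists z.
by case/negP: hx; rewrite hs /=; apply/existsP; exists z.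
Qed.

Lemma step_ext j u y c x : walkH E j.+1 u (y, c) -> y \notin A0 E -> adj x y ->
  walkH E j.+2 u (x, ~~ c).
Proof.
move=> hw hy hxy; have [h1 h2] := phase_ok hw hy.
apply: (walkH_step hw); rewrite /Hn /=; case: c hw h1 h2 => /= hw h1 h2.
  by case/orP: hxy => // h; have := h2 _ h.
by case/orP: hxy => // h; have := h1 _ h.
Qed.

Lemma invAD k : (forall x, x \in Ak k.+1 ->
   exists2 a, a \in A0 E & walkH E k.+1 (a, true) (x, ~~ odd k.+1)) /\
  (forall x, x \in Dk k.+1 ->
   exists2 a, a \in A0 E & walkH E k.+1 (a, false) (x, odd k.+1)).
Proof.
elim: k => [|k [IHA IHD]]; split => x.
- rewrite memA1 => /andP [hx /existsP [a /andP [ha h]]]; exists a => //.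
  by apply: walkH1; rewrite /Hn /= h.
- rewrite memD1 => /andP [hx /existsP [a /andP [ha h]]]; exists a => //.
  by apply: walkH1; rewrite /Hn /= h.
- rewrite memA2 // => /andP [hx /existsP [y /andP [hy h]]].
  have [a ha hw] := IHA _ hy; exists a => //.
  have := step_ext hw (notA0 (ALnotC hy)) h; by rewrite /= negbK.
- rewrite memD2 // => /andP [hx /existsP [y /andP [hy h]]].
  have [a ha hw] := IHD _ hy; exists a => //.
  have := step_ext hw (notA0 (DLnotC hy)) h; by [].
Qed.

Lemma typA k x : x \in Ak k.+1 ->
  (forall z, E x z -> ~~ odd k.+1) /\ (forall z, E z x -> odd k.+1).
Proof.
move=> hx; have [a _ hw] := (invAD k).1 _ hx.
have [h1 h2] := phase_ok hw (notA0 (ALnotC hx)); split => z hz.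
  exact: h1 hz.
by have := h2 _ hz; rewrite negbK.
Qed.

Lemma typD k x : x \in Dk k.+1 ->
  (forall z, E x z -> odd k.+1) /\ (forall z, E z x -> ~~ odd k.+1).
Proof.
move=> hx; have [a _ hw] := (invAD k).2 _ hx.
have [h1 h2] := phase_ok hw (notA0 (DLnotC hx)); split => z hz.
  exact: h1 hz.
exact: h2 hz.
Qed.

End Layers.

Section Core.
Variables (T : finType) (E : rel T) (n : nat).
Hypothesis n5 : 4 < n.
Hypothesis on : odd n.
Hypothesis conn : wconnected E.
Hypothesis nob : forall L, odd L -> L <= n - 2 -> ~ bad E L.
Variable a0 : T.
Hypothesis ha0 : a0 \in A0 E.

Local Notation m := (n.-1./2).
Local Notation Ak k := (lay E k).1.1.
Local Notation Dk k := (lay E k).1.2.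
Local Notation Ck k := (lay E k).2.
Local Notation condm := ([forall x in Ak m.-1, [forall y, ~~ E x y]] &&
                         [forall x in Dk m.-1, [forall y, ~~ E y x]]).

Lemma coverA_lt i : i < m -> coverA E m i = Ak i.
Proof. by move=> h; rewrite /coverA h. Qed.

Lemma coverD_lt i : i < m -> coverD E m i = Dk i.
Proof. by move=> h; rewrite /coverD h. Qed.

Lemma coverA_m : coverA E m m = if condm
  then [set x | (x \notin Ck m.-1) && [forall y, ~~ E y x]]
  else [set x | (x \notin Ck m.-1) && [forall y, ~~ E x y]].
Proof. rewrite /coverA ltnn; by case: (lay E m.-1) => [[Ap Dp] Cp]. Qed.

Lemma coverD_m : coverD E m m = if condm
  then [set x | (x \notin Ck m.-1) && [forall y, ~~ E x y]]
  else [set x | (x \notin Ck m.-1) && [forall y, ~~ E y x]].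
Proof. rewrite /coverD ltnn; by case: (lay E m.-1) => [[Ap Dp] Cp]. Qed.

Lemma nbr x : exists z, adj E x z.
Proof.
have [z hz] : exists z, E a0 z by move: ha0; rewrite inA0 => /andP [_ /existsP].
case: (x =P a0) => [->|ne]; first by exists z; rewrite /adj hz.
case/connectP: (conn x a0) => p; case: p => [|y p] /=; first by move=> _ e; case: ne.
by case/andP => h _ _; exists y.
Qed.

Lemma edge_out j : (exists x, x \notin Ck j) ->
  exists y z, [/\ y \in Ck j, z \notin Ck j & adj E y z].
Proof.
move=> [x hx].
case: (boolP [exists y, exists z, (y \in Ck j) && (z \notin Ck j) && adj E y z]).
  by move/existsP => [y /existsP [z /andP [/andP [h1 h2] h3]]]; exists y, z.
move=> hn; exfalso.
have cl : closed (fun a b => E a b || E b a) (Ck j).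
  move=> u v huv; apply/idP/idP => hu.
    case hv: (v \in Ck j) => //; case/negP: hn; apply/existsP; exists u; apply/existsP.
    by exists v; rewrite hu hv.
  case hv: (u \in Ck j) => //; case/negP: hn; apply/existsP; exists v; apply/existsP.
  by exists u; rewrite hu hv /adj orbC.
have := closed_connect cl (conn a0 x); rewrite (A0C j ha0) => /esym hx'.
by rewrite hx' in hx.
Qed.

Lemma condm_val : (exists x, x \notin Ck m.-1) -> condm = ~~ odd m.
Proof.
move=> hx; have [y [z [hy hz hyz]]] := edge_out hx.
have [p ep] : exists p, m = p.+2 by exists m.-2; lia.
have ep1 : m.-1 = p.+1 by rewrite ep.
rewrite ep1 in hy hz *; rewrite ep /=.
have hyL : (y \in Ak p.+1) || (y \in Dk p.+1).
  move: hy; rewrite memC => /orP [h|//]; exfalso.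
  by have := nbC h hyz; rewrite (negbTE hz).
case om: (odd p).
- apply/negbTE/negP => /andP [/forall_inP hA /forall_inP hD].
  case/orP: hyL => hyA.
    have [t1 t2] := typA hyA; case/orP: hyz => h.
      by have := hA _ hyA; move/forallP/(_ z); rewrite h.
    by have := t2 _ h; rewrite /= om.
  have [t1 t2] := typD hyA; case/orP: hyz => h.
    by have := t1 _ h; rewrite /= om.
  by have := hD _ hyA; move/forallP/(_ z); rewrite h.
- apply/andP; split; apply/forall_inP => x hx0; apply/forallP => w; apply/negP => h.
    by have := (typA hx0).1 _ h; rewrite /= om.
  by have := (typD hx0).2 _ h; rewrite /= om.
Qed.

Lemma remA x : x \in coverA E m m ->
  [/\ x \notin Ck m.-1, (forall z, E x z -> ~~ odd m) & (forall z, E z x -> odd m)].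
Proof.
rewrite coverA_m => h.
have hx : x \notin Ck m.-1 by move: h; case: ifP => _; rewrite inE => /andP [].
have hcv := condm_val (ex_intro _ x hx).
move: h; rewrite hcv; case: ifP => ho; rewrite inE => /andP [_ /forallP hf]; split => // z hz.
- by have := hf z; rewrite hz.
- by have := hf z; rewrite hz.
- by rewrite -(negbK (odd m)) ho.
Qed.

Lemma remD x : x \in coverD E m m ->
  [/\ x \notin Ck m.-1, (forall z, E x z -> odd m) & (forall z, E z x -> ~~ odd m)].
Proof.
rewrite coverD_m => h.
have hx : x \notin Ck m.-1 by move: h; case: ifP => _; rewrite inE => /andP [].
have hcv := condm_val (ex_intro _ x hx).
move: h; rewrite hcv; case: ifP => ho; rewrite inE => /andP [_ /forallP hf]; split => // z hz.
- by have := hf z; rewrite hz.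
- by rewrite -(negbK (odd m)) ho.
- by have := hf z; rewrite hz.
Qed.

Definition levAt x i := (0 < i -> x \notin Ck i.-1) /\ (i < m -> x \in Ck i).

Lemma levA x i : i <= m -> x \in coverA E m i -> levAt x i.
Proof.
move=> hi; case: (ltnP i m) => him.
  rewrite coverA_lt //; case: i hi him => [|k] _ _ h; split => hh //.
  - exact: (ALnotC h).
  - exact: (ALC h).
have ei : i = m by lia.
rewrite ei => /remA [hx _ _]; split => // h; by rewrite ltnn in h.
Qed.

Lemma levD x i : 0 < i <= m -> x \in coverD E m i -> levAt x i.
Proof.
move=> hi; case: (ltnP i m) => him.
  rewrite coverD_lt //; case: i hi him => [|k] hi0 // _ h; split => hh //.
  - exact: (DLnotC h).
  - exact: (DLC h).
have ei : i = m by lia.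
rewrite ei => /remD [hx _ _]; split => // h; by rewrite ltnn in h.
Qed.

Lemma lev_uniq x i j : i <= m -> j <= m -> levAt x i -> levAt x j -> i = j.
Proof.
move=> hi hj [li1 li2] [lj1 lj2]; case: (ltngtP i j) => // h.
  have := li2 (leq_trans h hj) => hx.
  have := lj1 (leq_ltn_trans (leq0n i) h); by rewrite (Csub _ hx) //; lia.
have := lj2 (leq_trans h hi) => hx.
have := li1 (leq_ltn_trans (leq0n j) h); by rewrite (Csub _ hx) //; lia.
Qed.

Lemma lev_adj x y i j : i <= m -> j <= m -> levAt x i -> levAt y j -> adj E x y -> j <= i.+1.
Proof.
move=> hi hj [li1 li2] [lj1 lj2] hxy; rewrite leqNgt; apply/negP => h.
have hx := li2 (ltn_trans (ltnSn i) (leq_trans h hj)).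
have hy := nbC hx hxy.
have := lj1 (leq_ltn_trans (leq0n _) h); by rewrite (Csub _ hy) //; lia.
Qed.

Lemma phA x i : i <= m -> 0 < i -> x \in coverA E m i ->
  (forall z, E x z -> ~~ odd i) /\ (forall z, E z x -> odd i).
Proof.
move=> hi ip; case: (ltnP i m) => him.
  rewrite coverA_lt //; case: i hi ip him => [|k] // _ _ _ h; exact: typA h.
have ei : i = m by lia.
by rewrite ei => /remA [_ h1 h2].
Qed.

Lemma phD x i : 0 < i <= m -> x \in coverD E m i ->
  (forall z, E x z -> odd i) /\ (forall z, E z x -> ~~ odd i).
Proof.
move=> hi; case: (ltnP i m) => him.
  rewrite coverD_lt //; case: i hi him => [|k] hi0 // _ h; exact: typD h.
have ei : i = m by lia.
by rewrite ei => /remD [_ h1 h2].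
Qed.


Lemma badAD k x y : k.+1 < m -> x \in Ak k.+1 -> y \in Dk k.+1 -> adj E x y -> False.
Proof.
move=> hk hx hy hxy.
have [a ha wa] := (invAD E k).1 x hx.
have [b hb wb] := (invAD E k).2 y hy.
have [tx1 tx2] := typA hx.
have st : Hn E (x, ~~ odd k.+1) (y, odd k.+1).
  move: tx1 tx2; rewrite /Hn /=; case: (odd k) => /= t1 t2; case/orP: hxy => h;
  first [by rewrite /= h | by have := t1 _ h | by have := t2 _ h].
have w := walkH_cat (walkH_step wa st) (walkH_rev wb).
have := nob (L := k.+2 + k.+1); apply; [lia | lia | exists a, b; split => //].
Qed.

Lemma cls_dest x (j : 'I_n) : phiRel E x j ->
  (exists i, [/\ i <= m, x \in coverA E m i & nat_of_ord j = i]) \/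
  (exists i, [/\ 0 < i <= m, x \in coverD E m i & nat_of_ord j = n - i]).
Proof.
move=> [[i [h1 [h2 h3]]]|[i [h1 [h2 h3]]]]; [left|right]; exists i; by split.
Qed.

Lemma mkA x i : i <= m -> x \in coverA E m i -> exists j : 'I_n, phiRel E x j.
Proof. move=> h1 h2; have hi : i < n by lia. by exists (Ordinal hi); left; exists i. Qed.

Lemma mkD x i : 0 < i <= m -> x \in coverD E m i -> exists j : 'I_n, phiRel E x j.
Proof. move=> h1 h2; have hi : n - i < n by lia. by exists (Ordinal hi); right; exists i. Qed.

Lemma inC_cases k x : x \in Ck k ->
  x \in A0 E \/ exists i, [/\ 0 < i, i <= k & (x \in Ak i) || (x \in Dk i)].
Proof.
elim: k => [|k IH]; first by left.
rewrite memC => /orP [/IH [h|[i [h1 h2 h3]]]|h]; first by left.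
  by right; exists i; split => //; lia.
by right; exists k.+1; split.
Qed.

Lemma cls_ex x : exists j : 'I_n, phiRel E x j.
Proof.
case hx: (x \in Ck m.-1).
  case: (inC_cases hx) => [h|[i [h1 h2 /orP [h3|h3]]]].
  - apply: (mkA (i:=0)) => //; rewrite coverA_lt //; lia.
  - apply: (mkA (i:=i)); first lia. rewrite coverA_lt //; lia.
  - apply: (mkD (i:=i)); first lia. rewrite coverD_lt //; lia.
have hx' : x \notin Ck m.-1 by rewrite hx.
have hA0 : x \notin A0 E := notA0 hx'.
case hi: [forall y, ~~ E y x].
  case hc : condm.
    by apply: (mkA (i:=m)) => //; rewrite coverA_m hc inE hx' hi.
  by apply: (mkD (i:=m)); [lia|]; rewrite coverD_m hc inE hx' hi.
have ho : [forall y, ~~ E x y].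
  move/negbT: hi => /forallPn [z /negPn hz].
  apply/forallP => w; apply/negP => hw; case/negP: hA0; rewrite inA0.
  by apply/andP; split; apply/existsP; [exists z | exists w].
case hc : condm.
  by apply: (mkD (i:=m)); [lia|]; rewrite coverD_m hc inE hx' ho.
by apply: (mkA (i:=m)) => //; rewrite coverA_m hc inE hx' ho.
Qed.

Lemma cls_uniq x (j1 j2 : 'I_n) : phiRel E x j1 -> phiRel E x j2 -> j1 = j2.
Proof.
move=> /cls_dest h1 /cls_dest h2; apply: val_inj => /=.
case: h1 => [[i [hi xi ei]]|[i [hi xi ei]]]; case: h2 => [[k [hk xk ek]]|[k [hk xk ek]]];
  rewrite ei ek.
- by rewrite (lev_uniq hi hk (levA hi xi) (levA hk xk)).
- have hk' : k <= m by lia.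
  have e := lev_uniq hi hk' (levA hi xi) (levD hk xk).
  have [z hz] := nbr x.
  have ip : 0 < i by lia.
  have [pa1 pa2] := phA hi ip xi; have [pd1 pd2] := phD hk xk.
  by case/orP: hz => h; [have := pa1 _ h; have := pd1 _ h | have := pa2 _ h; have := pd2 _ h];
    move=> u v; exfalso; lia.
- have hi' : i <= m by lia.
  have e := lev_uniq hi' hk (levD hi xi) (levA hk xk).
  have [z hz] := nbr x.
  have kp : 0 < k by lia.
  have [pa1 pa2] := phA hk kp xk; have [pd1 pd2] := phD hi xi.
  by case/orP: hz => h; [have := pa1 _ h; have := pd1 _ h | have := pa2 _ h; have := pd2 _ h];
    move=> u v; exfalso; lia.
- have hi' : i <= m by lia.
  have hk' : k <= m by lia.
  by rewrite (lev_uniq hi' hk' (levD hi xi) (levD hk xk)).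
Qed.

Lemma cls_hom x y (i j : 'I_n) : E x y -> phiRel E x i -> phiRel E y j -> Defs.AC i j.
Proof.
move=> hxy /cls_dest hx /cls_dest hy.
have n3 : 2 < n by lia.
have axy : adj E x y by rewrite /adj hxy.
have ayx : adj E y x by rewrite /adj hxy orbT.
case: hx => [[a [ha xa ea]]|[a [ha xa ea]]]; case: hy => [[b [hb yb eb]]|[b [hb yb eb]]].
- have la := levA ha xa; have lb := levA hb yb.
  have l1 := lev_adj ha hb la lb axy; have l2 := lev_adj hb ha lb la ayx.
  case: (posnP a) => a0'.
    case: (posnP b) => b0'.
      exfalso; rewrite a0' in xa; rewrite b0' in yb.
      rewrite coverA_lt in xa; last lia. rewrite coverA_lt in yb; last lia.
      apply: (nob (L:=1)) => //; first lia.
      exists x, y; split; [exact: xa | exact: yb | apply: walkH1; by rewrite /Hn /= hxy].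
    have [_ t] := phA hb b0' yb; have ob := t _ hxy.
    apply: (AC_up on n3); lia.
  have [t _] := phA ha a0' xa; have oa := t _ hxy.
  case: (posnP b) => b0'; first by exfalso; lia.
  have [_ t'] := phA hb b0' yb; have ob := t' _ hxy.
  have : (b = a.+1) \/ (a = b.+1) by lia.
  by case=> e; [apply: (AC_up on n3) | apply: (AC_dn on n3)]; lia.
- have hb' : b <= m by lia.
  have la := levA ha xa; have lb := levD hb yb.
  have l1 := lev_adj ha hb' la lb axy; have l2 := lev_adj hb' ha lb la ayx.
  have [_ t'] := phD hb yb; have ob := t' _ hxy.
  case: (posnP a) => a0'; first by exfalso; lia.
  have [t _] := phA ha a0' xa; have oa := t _ hxy.
  have eab : a = b by lia.
  case: (ltnP a m) => am.
    exfalso; subst b; rewrite coverA_lt // in xa; rewrite coverD_lt // in yb.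
    have [k ek] : exists k, a = k.+1 by exists a.-1; lia.
    rewrite ek in xa yb am; exact: badAD am xa yb axy.
  apply: (AC_up on n3); lia.
- have ha' : a <= m by lia.
  have la := levD ha xa; have lb := levA hb yb.
  have l1 := lev_adj ha' hb la lb axy; have l2 := lev_adj hb ha' lb la ayx.
  have [t _] := phD ha xa; have oa := t _ hxy.
  case: (posnP b) => b0'.
    apply: (AC_wrap on n3); lia.
  have [_ t'] := phA hb b0' yb; have ob := t' _ hxy.
  have eab : a = b by lia.
  case: (ltnP b m) => bm.
    exfalso; subst a; rewrite coverA_lt // in yb; rewrite coverD_lt // in xa.
    have [k ek] : exists k, b = k.+1 by exists b.-1; lia.
    rewrite ek in xa yb bm; exact: badAD bm yb xa ayx.
  apply: (AC_dn on n3); lia.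
- have ha' : a <= m by lia.
  have hb' : b <= m by lia.
  have la := levD ha xa; have lb := levD hb yb.
  have l1 := lev_adj ha' hb' la lb axy; have l2 := lev_adj hb' ha' lb la ayx.
  have [t _] := phD ha xa; have oa := t _ hxy.
  have [_ t'] := phD hb yb; have ob := t' _ hxy.
  have : (b = a.+1) \/ (a = b.+1) by lia.
  by case=> e; [apply: (AC_dn on n3) | apply: (AC_up on n3)]; lia.
Qed.

Theorem core_cover : cover_hom E n.
Proof.
split.
  move=> x; have [j hj] := cls_ex x; exists j; split => // j' hj'; exact: cls_uniq hj hj'.
move=> x y i j hxy hi hj; exact: cls_hom hxy hi hj.
Qed.

End Core.

Lemma cover_to_hom (T : finType) (E : rel T) n : cover_hom E n -> homAC E n.
Proof.
case=> h1 h2.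
have ex : forall x : T, exists j : 'I_n, phiRel E x j by move=> x; have [j [hj _]] := h1 x; exists j.
pose f x := proj1_sig (constructive_indefinite_description _ (ex x)).
have hf : forall x : T, phiRel E x (f x) by move=> x; exact: proj2_sig (constructive_indefinite_description _ (ex x)).
by exists f => x y hxy; exact: h2 x y _ _ hxy (hf x) (hf y).
Qed.

Theorem mainTheorem7 (T : finType) (E : rel T) (n : nat) :
  5 <= n -> odd n -> oriented E -> wconnected E ->
  [/\ (homAC E n <->
        (forall l, ~~ odd l -> 4 <= l <= n.+1 -> ~ has_semiwalk E (patQ l))),
      ((forall l, ~~ odd l -> 4 <= l <= n.+1 -> ~ has_semiwalk E (patQ l))
        <-> ~ homQ E n.+1)
    & ((exists v, [exists y, E y v] && [exists y, E v y]) ->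
        (homAC E n <-> cover_hom E n))].
Proof.
move=> n5 on _ conn.
have n3 : 2 < n by lia.
have IINB : (forall l, ~~ odd l -> 4 <= l <= n.+1 -> ~ has_semiwalk E (patQ l)) <->
            (forall L, odd L -> L <= n - 2 -> ~ bad E L).
  split => H.
    move=> L oL hL hb; have := bad_walk oL hb; apply: H; lia.
  move=> l el hl hw; have hl4 : 4 <= l by lia.
  by apply: (H (l - 3) _ _ (walk_bad el hl4 hw)); lia.
have homNB : homAC E n -> forall L, odd L -> L <= n - 2 -> ~ bad E L.
  by move=> h L oL hL; apply: (homAC_nobad on n3 h); lia.
have NBhom : (forall L, odd L -> L <= n - 2 -> ~ bad E L) -> homAC E n.
  move=> nb; case: (boolP [exists v, v \in A0 E]) => [/existsP [a ha]|hn].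
    exact: cover_to_hom (core_cover n5 on conn nb ha).
  have o1 : 1 < n by lia.
  have o0 : 0 < n by lia.
  exists (fun x => if [exists y, E x y] then Ordinal o0 else Ordinal o1) => x y hxy.
  have sx : [exists z, E x z] by apply/existsP; exists y.
  have sy : ~~ [exists z, E y z].
    apply/negP => h; case/negP: hn; apply/existsP; exists y; rewrite inA0.
    by apply/andP; split => //; apply/existsP; exists x.
  by rewrite sx (negbTE sy); apply: (AC_up on n3).
split.
- split => h; first by apply/IINB; exact: homNB h.
  by apply: NBhom; apply/IINB.
- split.
    move=> h hq; have nb := (IINB.1 h).
    have hw := homQ_walk (ltn0Sn n) hq.
    have e1 : ~~ odd n.+1 by rewrite /= on.
    have e2 : 4 <= n.+1 by lia.
    by apply: (nb _ _ _ (walk_bad e1 e2 hw)); lia.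
  move=> hq; apply/IINB => L oL hL [a [b [ha hb hw]]]; apply: hq.
  have hL1 : 0 < L by lia.
  have hw' := walkH_pad2 ((n - 2 - L)./2) hL1 hw.
  have e : L + ((n - 2 - L)./2).*2 = n - 2 by lia.
  rewrite e in hw'.
  have hb' : bad E (n - 2) by exists a, b.
  have := bad_walk (L := n - 2) _ hb'; have -> : n - 2 + 3 = n.+1 by lia.
  move=> hs; apply: walk_homQ; apply: hs; lia.
- move=> [v hv]; have ha : v \in A0 E by rewrite inA0.
  split; last exact: cover_to_hom.
  move=> h; exact: (core_cover n5 on conn (homNB h) ha).
Qed.
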